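(* Consider the binary delegated search model described in the context. Let $w_i = y_i - c_i/p_i$ and $z_i = x_i - c_i/p_i$, and fix an ordering of the options in non-increasing order of $w_i$. For a half-infinite interval $X$ of the form $X=(\theta,\infty)$ or $X=[\theta,\infty)$ with $\theta\in\mathbb{R}$, let $M(X)$ be the single-proposal mechanism in which a proposal $\omega_i$ is accepted if and only if $\omega_i$ is feasible and $z_i\in X$. Suppose that under $M(X)$ the agent examines the options $\omega_i$ with $z_i \in X$ in the fixed order (non-increasing $w_i$) and proposes the first one found to be feasible (this is a best response of the agent to $M(X)$). Then there exists such an interval $X$ for which the expected net value of $M(X)$ to the principal (the principal's value $x_i$ of the accepted proposal, or $0$ if none is accepted, minus the total cost of all options examined by the agent) is at least one half of the maximum expected net value the principal could achieve by performing an optimal sequential search herself, without delegation.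
   Context: Binary model: there are $m$ options $\omega_1,\ldots,\omega_m$. Option $\omega_i$ is feasible with probability $p_i>0$, independently of the other options. If feasible it yields the commonly known utility $x_i\ge 0$ to the principal and $y_i$ to the agent; if infeasible it yields $0$ to both. Determining whether $\omega_i$ is feasible requires paying a cost $c_i\ge 0$, and it is assumed that $c_i\le p_i y_i$ for every $i$. In delegated search the agent adaptively chooses options to examine, paying their costs, and then proposes one option. A single-proposal mechanism accepts the proposal if it lies in a specified eligible set and otherwise the outcome is the status quo with value $0$. The agent maximizes the expected $y$-value of the accepted proposal minus his total examination costs. Self-search by the principal: the principal adaptively examines options in any order she chooses (paying their costs), stops at any time, and selects at most one examined feasible option. Her net value is the $x$-value of the selected option minus the total examination costs. *)

(* Defs.v *)
From mathcomp Require Import all_boot all_order all_algebra.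
Set Implicit Arguments. Unset Strict Implicit. Unset Printing Implicit Defensive.
Import Order.TTheory GRing.Theory Num.Theory.
Local Open Scope ring_scope.

(* An adaptive (deterministic) search policy over options 'I_m, as a decision
   tree: either stop and select at most one option, or examine option i and
   continue with the first subtree if i turns out feasible, the second if not. *)
Inductive policy (m : nat) : Type :=
| Stop of option 'I_m
| Exam of 'I_m & policy m & policy m.

Arguments Stop {m}.
Arguments Exam {m}.

(* A policy is admissible given the list K of options already examined and
   found feasible: it may only select an option examined and found feasible. *)
Fixpoint valid (m : nat) (t : policy m) (K : seq 'I_m) : bool :=
  match t with
  | Stop None => true
  | Stop (Some i) => i \in K
  | Exam i t1 t2 => valid t1 (i :: K) && valid t2 K
  end.

Section Values.
Variables (R : realFieldType) (m : nat).

Fixpoint payoff (x c : 'I_m -> R) (om : {ffun 'I_m -> bool}) (t : policy m) : R :=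
  match t with
  | Stop None => 0
  | Stop (Some i) => if om i then x i else 0
  | Exam i t1 t2 => - c i + (if om i then payoff x c om t1 else payoff x c om t2)
  end.

Definition prob (p : 'I_m -> R) (om : {ffun 'I_m -> bool}) : R :=
  \prod_i (if om i then p i else 1 - p i).

Definition expval (p x c : 'I_m -> R) (t : policy m) : R :=
  \sum_(om : {ffun 'I_m -> bool}) prob p om * payoff x c om t.

Definition agent_tree (s : seq 'I_m) : policy m :=
  foldr (fun i t => Exam i (Stop (Some i)) t) (Stop None) s.

Definition wval (p y c : 'I_m -> R) (i : 'I_m) : R := y i - c i / p i.
Definition zval (p x c : 'I_m -> R) (i : 'I_m) : R := x i - c i / p i.

Definition inX (strict : bool) (theta z : R) : bool :=
  if strict then theta < z else theta <= z.

Definition delegated_value (p x c : 'I_m -> R) (s : seq 'I_m)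
    (strict : bool) (theta : R) : R :=
  expval p x c (agent_tree [seq i <- s | inX strict theta (zval p x c i)]).

End Values.

(* Main.v *)
Require Import Defs.
From mathcomp Require Import all_boot all_order all_algebra.
From mathcomp Require Import ring lra.
Import Order.TTheory GRing.Theory Num.Theory.
Local Open Scope ring_scope.

Section Aux.
Variables (R : realFieldType) (m : nat).
Implicit Types om : {ffun 'I_m -> bool}.

Definition flip (i : 'I_m) om : {ffun 'I_m -> bool} :=
  [ffun j => if j == i then ~~ om i else om j].

Lemma flipK i : involutive (flip i).
Proof.
move=> om; apply/ffunP => j; rewrite !ffunE.
case: eqP => [->|]; by rewrite ?eqxx ?negbK.
Qed.

Lemma flip_other i j om : j != i -> flip i om j = om j.
Proof. by move=> /negbTE h; rewrite ffunE h. Qed.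

Definition rest (p : 'I_m -> R) i om : R :=
  \prod_(j | j != i) (if om j then p j else 1 - p j).

Lemma prob_split (p : 'I_m -> R) i om :
  prob p om = (if om i then p i else 1 - p i) * rest p i om.
Proof. by rewrite /prob (bigD1 i). Qed.

Lemma rest_flip (p : 'I_m -> R) i om : rest p i (flip i om) = rest p i om.
Proof. by apply: eq_bigr => j hj; rewrite flip_other. Qed.

Lemma sum_flip (p : 'I_m -> R) i (h : {ffun 'I_m -> bool} -> R) :
  (forall om, h (flip i om) = h om) ->
  \sum_(om : {ffun 'I_m -> bool}) (if om i then prob p om * h om else 0) =
  p i * \sum_(om : {ffun 'I_m -> bool}) prob p om * h om.
Proof.
move=> hh.
set A := \sum_(om : {ffun 'I_m -> bool}) (if om i then rest p i om * h om else 0).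
have eA : \sum_(om : {ffun 'I_m -> bool}) (if om i then 0 else rest p i om * h om) = A.
  rewrite /A (reindex_inj (can_inj (flipK i))); apply: eq_bigr => om _.
  by rewrite hh rest_flip ffunE eqxx; case: (om i).
have e1 : \sum_(om : {ffun 'I_m -> bool}) (if om i then prob p om * h om else 0) = p i * A.
  rewrite /A mulr_sumr; apply: eq_bigr => om _; rewrite (prob_split _ i).
  by case: (om i); rewrite ?mulr0 // mulrA.
have e2 : \sum_(om : {ffun 'I_m -> bool}) prob p om * h om = p i * A + (1 - p i) * A.
  rewrite -{2}eA !mulr_sumr -big_split; apply: eq_bigr => om _.
  rewrite (prob_split _ i); case: (om i); by rewrite /= ?mulr0 ?addr0 ?add0r mulrA.
by rewrite e1 e2 -mulrDl addrC subrK mul1r.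
Qed.

Lemma sum_prob (p : 'I_m -> R) : \sum_(om : {ffun 'I_m -> bool}) prob p om = 1.
Proof.
rewrite /prob -(bigA_distr_bigA (fun i (b : bool) => if b then p i else 1 - p i)).
by apply: big1 => i _; rewrite big_bool /= addrC subrK.
Qed.

Lemma prob_ge0 (p : 'I_m -> R) om : (forall i, 0 <= p i <= 1) -> 0 <= prob p om.
Proof.
move=> hp; apply: prodr_ge0 => i _; case/andP: (hp i) => h0 h1.
by case: (om i); rewrite ?subr_ge0.
Qed.


Section Search.
Variables (p x c : 'I_m -> R).
Hypothesis hp : forall i, 0 < p i <= 1.
Hypothesis hc : forall i, 0 <= c i.
Hypothesis hx : forall i, 0 <= x i.

Lemma hp01 i : 0 <= p i <= 1.
Proof. by case/andP: (hp i) => /ltW -> ->. Qed.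

Lemma pneq0 i : p i != 0.
Proof. by case/andP: (hp i) => /lt0r_neq0. Qed.

Fixpoint Sfun (t : policy m) (E : seq 'I_m) om : R :=
  match t with
  | Stop _ => 0
  | Exam i t1 t2 =>
      (if i \in E then 0 else (if om i then c i / p i else 0) - c i)
      + (if om i then Sfun t1 (i :: E) om else Sfun t2 (i :: E) om)
  end.

Lemma ES t E (w : {ffun 'I_m -> bool} -> R) :
  (forall j, j \notin E -> forall om, w (flip j om) = w om) ->
  \sum_(om : {ffun 'I_m -> bool}) prob p om * w om * Sfun t E om = 0.
Proof.
elim: t E w => [o|i t1 IH1 t2 IH2] E w hw.
  by apply: big1 => om _; rewrite mulr0.
pose w1 om := if om i then w om else 0.
pose w2 om := if om i then 0 else w om.
have hw1 : forall j, j \notin i :: E -> forall om, w1 (flip j om) = w1 om.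
  move=> j; rewrite inE negb_or => /andP[hji hjE] om.
  by rewrite /w1 flip_other 1?eq_sym // hw.
have hw2 : forall j, j \notin i :: E -> forall om, w2 (flip j om) = w2 om.
  move=> j; rewrite inE negb_or => /andP[hji hjE] om.
  by rewrite /w2 flip_other 1?eq_sym // hw.
have E1 : forall om, prob p om * w om * Sfun (Exam i t1 t2) E om =
   prob p om * w om *
   (if i \in E then 0 else (if om i then c i / p i else 0) - c i)
   + (prob p om * w1 om * Sfun t1 (i :: E) om
      + prob p om * w2 om * Sfun t2 (i :: E) om).
  by move=> om /=; rewrite /w1 /w2; case: (om i); rewrite mulrDr ?mulr0 ?mul0r ?addr0 ?add0r.
rewrite (eq_bigr _ (fun om _ => E1 om)).
rewrite big_split /= big_split /= IH1 // IH2 // !addr0.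
case hiE: (i \in E); first by apply: big1 => om _ /=; rewrite mulr0.
have hwi := hw i (negbT hiE).
have E2 : forall om, prob p om * w om * ((if om i then c i / p i else 0) - c i) =
   c i / p i * (if om i then prob p om * w om else 0) - c i * (prob p om * w om).
  by move=> om; case: (om i); rewrite ?mulr0 ?add0r; ring.
rewrite (eq_bigr _ (fun om _ => E2 om)).
rewrite big_split /= -mulr_sumr sumrN -mulr_sumr sum_flip //.
by rewrite mulrA divfK ?pneq0 // subrr.
Qed.


Definition Bmax om : R := \big[Order.max/0]_(j | om j) zval p x c j.

Lemma Bmax_ge0 om : 0 <= Bmax om.
Proof.
rewrite /Bmax; apply: (big_rec (fun v => 0 <= v)) => // j v _ hv.
by rewrite le_max hv orbT.
Qed.

Lemma z_le_Bmax om j : om j -> zval p x c j <= Bmax om.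
Proof. by move=> hj; apply: (le_bigmax_cond _ (P := fun j => om j)). Qed.

Lemma cp_ge0 j : 0 <= c j / p j.
Proof. by rewrite divr_ge0 // (ltW (proj1 (andP (hp j)))). Qed.

Lemma sumK_cons i (K : seq 'I_m) :
  \sum_(j | j \in i :: K) c j / p j <= c i / p i + \sum_(j | j \in K) c j / p j.
Proof.
rewrite big_mkcond [X in _ <= _ + X]big_mkcond.
have e : \sum_(j | j == i) c j / p j = c i / p i by rewrite big_pred1_eq.
rewrite -e [\sum_(j | j == i) _]big_mkcond -big_split.
apply: ler_sum => j _; rewrite inE.
case: (j == i); case: (j \in K) => /=; rewrite ?addr0 ?add0r ?lerDl ?cp_ge0 //.
Qed.

Lemma payoff_le t (K E : seq 'I_m) om : valid t K ->
  (forall j, j \in K -> om j) -> (forall j, j \in E -> om j -> j \in K) ->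
  payoff x c om t <= Bmax om + \sum_(j | j \in K) c j / p j + Sfun t E om.
Proof.
have sK0 : forall K : seq 'I_m, 0 <= \sum_(j | j \in K) c j / p j.
  by move=> K'; apply: sumr_ge0 => j _; apply: cp_ge0.
elim: t K E => [[i|]|i t1 IH1 t2 IH2] K E /=.
- move=> hiK hK _; rewrite (hK _ hiK) addr0.
  have -> : x i = zval p x c i + c i / p i by rewrite /zval subrK.
  apply: lerD; first by apply: z_le_Bmax; apply: hK.
  by rewrite (bigD1 i) //= lerDl; apply: sumr_ge0 => j _; apply: cp_ge0.
- by move=> _ _ _; rewrite addr0 addr_ge0 ?Bmax_ge0.
move=> /andP[v1 v2] hK hE.
have hK1 : om i -> forall j, j \in i :: K -> om j.
  by move=> hoi j; rewrite inE => /orP[/eqP->//|]; apply: hK.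
have hE1 : forall j, j \in i :: E -> om j -> j \in i :: K.
  by move=> j; rewrite !inE => /orP[->//|hj hoj]; rewrite hE ?orbT.
have hE2 : ~~ om i -> forall j, j \in i :: E -> om j -> j \in K.
  move=> hn j; rewrite inE => /orP[/eqP->|]; last exact: hE.
  by rewrite (negbTE hn).
have hci := hc i.
case hiE: (i \in E); case hoi: (om i); rewrite /= ?add0r.
- have hiK : i \in K by apply: hE.
  have := IH1 (i :: K) (i :: E) v1 (hK1 hoi) hE1.
  have -> : \sum_(j | j \in i :: K) c j / p j = \sum_(j | j \in K) c j / p j.
    by apply: eq_bigl => j; rewrite inE; case: eqP => // ->.
  lra.
- have := IH2 K (i :: E) v2 hK (hE2 (negbT hoi)); lra.
- have := IH1 (i :: K) (i :: E) v1 (hK1 hoi) hE1.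
  have := sumK_cons i K; lra.
- have := IH2 K (i :: E) v2 hK (hE2 (negbT hoi)); lra.
Qed.


Lemma expval_le t : valid t [::] ->
  expval p x c t <= \sum_(om : {ffun 'I_m -> bool}) prob p om * Bmax om.
Proof.
move=> vt; rewrite /expval.
have e0 : \sum_(j | j \in [::]) c j / p j = 0 by apply: big_pred0 => j.
apply: (@le_trans _ _ (\sum_(om : {ffun 'I_m -> bool})
    (prob p om * Bmax om + prob p om * 1 * Sfun t [::] om))).
  apply: ler_sum => om _; rewrite mulr1 -mulrDr; apply: ler_wpM2l.
    exact: prob_ge0 hp01.
  by have := @payoff_le t [::] [::] om vt (fun j (h : j \in [::]) => ltac:(by rewrite in_nil in h)) (fun j (h : j \in [::]) _ => h); rewrite e0 addr0.
by rewrite big_split /= (ES t [::] (fun _ => 1)) // addr0.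
Qed.

Fixpoint aval (L : seq 'I_m) : R :=
  if L is i :: L' then p i * zval p x c i + (1 - p i) * aval L' else 0.

Lemma agent_exp (L : seq 'I_m) (w : {ffun 'I_m -> bool} -> R) : uniq L ->
  (forall j, j \in L -> forall om, w (flip j om) = w om) ->
  \sum_(om : {ffun 'I_m -> bool}) prob p om * w om * payoff x c om (agent_tree L) =
  (\sum_(om : {ffun 'I_m -> bool}) prob p om * w om) * aval L.
Proof.
elim: L w => [|i L IH] w /=.
  by move=> _ _; rewrite mulr0; apply: big1 => om _; rewrite mulr0.
move=> /andP[hiL uL] hw.
pose w2 om := if om i then 0 else w om.
have hw2 : forall j, j \in L -> forall om, w2 (flip j om) = w2 om.
  move=> j hj om; have hji : i != j by apply: contraNneq hiL => ->.
  by rewrite /w2 (flip_other _ _ _ hji) hw // inE hj orbT.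
have hwi : forall om, w (flip i om) = w om by apply: hw; rewrite inE eqxx.
have E1 : forall om, prob p om * w om * payoff x c om (agent_tree (i :: L)) =
   - c i * (prob p om * w om) + x i * (if om i then prob p om * w om else 0)
   + prob p om * w2 om * payoff x c om (agent_tree L).
  by move=> om /=; rewrite /w2; case: (om i); rewrite /= ?mulr0 ?addr0; ring.
have E2 : forall om, prob p om * w2 om =
   prob p om * w om - (if om i then prob p om * w om else 0).
  by move=> om; rewrite /w2; case: (om i); rewrite ?mulr0 ?subr0 ?subrr.
rewrite (eq_bigr _ (fun om _ => E1 om)) big_split /= big_split /=.
rewrite IH // (eq_bigr _ (fun om _ => E2 om)) sumrB -!mulr_sumr sum_flip //.
rewrite /zval; set W := \sum_(om : {ffun 'I_m -> bool}) prob p om * w om.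
have hpi := pneq0 i.
rewrite mulrBr [p i * (c i / p i)]mulrC divfK //; ring.
Qed.


Definition PL (L : seq 'I_m) : R := \prod_(i <- L) (1 - p i).
Definition DL (th : R) (L : seq 'I_m) : R := \sum_(i <- L) p i * (zval p x c i - th).

Lemma PL01 L : 0 <= PL L <= 1.
Proof.
rewrite /PL; elim: L => [|i L IH]; first by rewrite big_nil ler01 lexx.
rewrite big_cons; case/andP: IH => h0 h1; case/andP: (hp01 i) => q0 q1.
have a0 : 0 <= 1 - p i by rewrite subr_ge0.
have a1 : 1 - p i <= 1 by rewrite lerBlDr lerDl.
apply/andP; split; first exact: mulr_ge0.
by rewrite -[1 in X in _ <= X]mulr1; apply: ler_pM.
Qed.

Lemma aval_ge th L : (forall i, i \in L -> th <= zval p x c i) ->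
  th * (1 - PL L) + PL L * DL th L <= aval L.
Proof.
rewrite /PL /DL; elim: L => [|i L IH] hL /=.
  by rewrite !big_nil subrr mulr0 mul1r addr0.
rewrite !big_cons.
have IH' := IH (fun j hj => hL j ltac:(by rewrite inE hj orbT)).
have hz : 0 <= zval p x c i - th by rewrite subr_ge0 hL // inE eqxx.
have := PL01 L; rewrite /PL; set P := \prod_(j <- L) (1 - p j); set D := \sum_(j <- L) _.
move=> /andP[P0 P1]; case/andP: (hp01 i) => q0 q1.
set a := p i in hz q0 q1 *; set z := zval p x c i in hz *.
set v := aval L in IH' *.
have h1 : 0 <= (1 - a) * (v - (th * (1 - P) + P * D)).
  by apply: mulr_ge0; rewrite subr_ge0.
have h2 : 0 <= a * (z - th) * (1 - (1 - a) * P).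
  apply: mulr_ge0; first exact: mulr_ge0.
  rewrite subr_ge0 -[1 in X in _ <= X]mulr1; apply: ler_pM => //; first by rewrite subr_ge0.
  by rewrite lerBlDr lerDl.
have e : a * z + (1 - a) * v - (th * (1 - (1 - a) * P) + (1 - a) * P * (a * (z - th) + D))
  = (1 - a) * (v - (th * (1 - P) + P * D)) + a * (z - th) * (1 - (1 - a) * P) by ring.
rewrite -subr_ge0 e; exact: addr_ge0.
Qed.

Lemma le_sum_mem (F : 'I_m -> R) (L : seq 'I_m) k :
  (forall i, i \in L -> 0 <= F i) -> k \in L -> F k <= \sum_(i <- L) F i.
Proof.
elim: L => [|i L IH]; first by move=> _; rewrite in_nil.
move=> hF; rewrite inE big_cons => /orP[/eqP->|hk].
  by rewrite lerDl big_seq; apply: sumr_ge0 => j hj; apply: hF; rewrite inE hj orbT.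
have hFi : 0 <= F i by apply: hF; rewrite inE eqxx.
have := IH (fun j hj => hF j ltac:(by rewrite inE hj orbT)) hk; lra.
Qed.

Lemma EB_le th L : 0 <= th -> (forall i, i \in L -> th <= zval p x c i) ->
  (forall k, th <= zval p x c k -> k \in L) ->
  \sum_(om : {ffun 'I_m -> bool}) prob p om * Bmax om <= th + DL th L.
Proof.
move=> th0 hL hL2.
have pw : forall om, Bmax om <= th + \sum_(i <- L) (if om i then zval p x c i - th else 0).
  move=> om.
  have S0 : 0 <= \sum_(i <- L) (if om i then zval p x c i - th else 0).
    rewrite big_seq; apply: sumr_ge0 => i hi; case: (om i) => //=; rewrite subr_ge0; exact: hL.
  apply: bigmax_le; first exact: addr_ge0.
  have F0 : forall i, i \in L -> 0 <= (fun i => if om i then zval p x c i - th else 0) i.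
    by move=> i hi /=; case: (om i) => //=; rewrite subr_ge0; exact: hL i hi.
  move=> k hk; case: (lerP th (zval p x c k)) => hz.
    have := @le_sum_mem (fun i => if om i then zval p x c i - th else 0) L k F0 (hL2 k hz).
    rewrite /= hk; lra.
  lra.
apply: (@le_trans _ _ (\sum_(om : {ffun 'I_m -> bool})
   (th * prob p om + \sum_(i <- L) (if om i then prob p om * (zval p x c i - th) else 0)))).
  apply: ler_sum => om _.
  have := ler_wpM2l (prob_ge0 p om hp01) (pw om).
  rewrite mulrDr mulr_sumr.
  have -> : \sum_(i <- L) prob p om * (if om i then zval p x c i - th else 0) =
    \sum_(i <- L) (if om i then prob p om * (zval p x c i - th) else 0).
    by apply: eq_bigr => i _; case: (om i); rewrite ?mulr0.
  by rewrite [th * _]mulrC.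
rewrite big_split /= -mulr_sumr sum_prob mulr1 exchange_big /= /DL.
rewrite lerD2l le_eqVlt; apply/orP; left; apply/eqP; apply: eq_bigr => i _.
by rewrite sum_flip // -mulr_suml sum_prob mul1r.
Qed.

End Search.

End Aux.

Theorem mainTheorem1 (R : realFieldType) (m : nat) (p x y c : 'I_m -> R)
  (hp : forall i, 0 < p i <= 1) (hx : forall i, 0 <= x i)
  (hc : forall i, 0 <= c i) (hcy : forall i, c i <= p i * y i)
  (s : seq 'I_m) (hs : perm_eq s (enum 'I_m))
  (hsort : sorted (fun i j => wval p y c j <= wval p y c i) s) :
  exists (strict : bool) (theta : R),
    forall t : policy m, valid t [::] ->
      expval p x c t / 2 <= delegated_value p x c s strict theta.
Proof.
set EB := \sum_(om : {ffun 'I_m -> bool}) prob p om * @Bmax _ _ p x c om.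
have EB0 : 0 <= EB.
  apply: sumr_ge0 => om _; apply: mulr_ge0; first by apply: prob_ge0; apply: hp01.
  exact: Bmax_ge0.
set th := EB / 2.
exists false, th => t vt.
have h1 : expval p x c t <= EB by apply: expval_le.
set L := [seq i <- s | inX false th (zval p x c i)].
have uL : uniq L by rewrite filter_uniq // (perm_uniq hs) enum_uniq.
have hL : forall i, i \in L -> th <= zval p x c i by move=> i; rewrite mem_filter => /andP[].
have hL2 : forall k, th <= zval p x c k -> k \in L.
  by move=> k hk; rewrite mem_filter /inX hk (perm_mem hs) mem_enum.
have hd : delegated_value p x c s false th = aval R m p x c L.
  rewrite /delegated_value /expval -/L.
  have := @agent_exp R m p x c hp L (fun _ => 1) uL (fun _ _ _ => erefl).
  have e1 : \sum_(om : {ffun 'I_m -> bool}) prob p om * 1 = 1.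
    by rewrite (eq_bigr _ (fun om _ => mulr1 _)) sum_prob.
  by rewrite e1 mul1r => <-; apply: eq_bigr => om _; rewrite mulr1.
rewrite hd.
have th0 : 0 <= th by rewrite divr_ge0.
have h2 := @aval_ge R m p x c hp th L hL.
have h3 : EB <= th + DL R m p x c th L by apply: EB_le.
have hP := @PL01 R m p hp L.
have eth : EB = th + th by rewrite /th -splitr.
have e5 : expval p x c t / 2 <= th by rewrite /th; move: h1; clearbody EB; lra.
move: hP h2 h3 eth e5; clearbody th EB.
move: (PL R m p L) (DL R m p x c th L) => P D /andP[P0 P1] h2 h3 eth e5.
have h4 : 0 <= P * (D - th) by apply: mulr_ge0; lra.
have e6 : th * (1 - P) + P * D = th + P * (D - th) by ring.
lra.
Qed.
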